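(* Let $\varphi$ be a flow on a locally compact metric space $X$, let $N\subset X$ be an isolating neighborhood and let $\gamma:\mathbb R\to X$ be a full solution. The following are equivalent: (i) $\gamma^{-1}(N)$ is right infinite (respectively left infinite); (ii) $\gamma$ wades through $N$ in plus infinity (respectively minus infinity); (iii) $\operatorname{Inv}N\cap\omega(\gamma)\ne\emptyset$ (respectively $\operatorname{Inv}N\cap\alpha(\gamma)\neq\emptyset$).
   Context: A full solution is a map $\gamma:\mathbb R\to X$ with $\gamma(s+t)=\varphi(\gamma(s),t)$. $\alpha(\gamma)=\bigcap_{t<0}\operatorname{cl}\gamma((-\infty,t])$, $\omega(\gamma)=\bigcap_{t>0}\operatorname{cl}\gamma([t,\infty))$. $\operatorname{Inv}N=\{x\in N\mid\varphi(x,\mathbb R)\subset N\}$; an isolating neighborhood is a compact $N$ with $\operatorname{Inv}N\subset\operatorname{int}N$. A set $A\subset\mathbb R$ is right infinite if $\sup\{b-a\mid a,b\ge0,\ [a,b]\subset A\}=\infty$, and left infinite if $\sup\{b-a\mid a,b\le0,\ [a,b]\subset A\}=\infty$. $\gamma$ wades through $N$ in plus infinity if there are real sequences $(t^-_n),(t^+_n)$ with $t^-_n\to+\infty$, $t^+_n-t^-_n\to+\infty$ and $\gamma([t^-_n,t^+_n])\subset N$ for all $n$; it wades through $N$ in minus infinity if there are such sequences with $t^+_n\to-\infty$, $t^+_n-t^-_n\to+\infty$ and $\gamma([t^-_n,t^+_n])\subset N$ for all $n$. *)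

(* Defs.v *)
From HB Require Import structures.
From mathcomp Require Import all_boot all_order all_algebra.
From mathcomp Require Import all_classical all_reals all_analysis.
Set Implicit Arguments. Unset Strict Implicit. Unset Printing Implicit Defensive.
Import Order.TTheory GRing.Theory Num.Theory.
Import numFieldNormedType.Exports.
Local Open Scope classical_set_scope.
Local Open Scope ring_scope.

Section Flows.
Context {R : realType} {X : metricType R}.

Definition is_flow (phi : X -> R -> X) : Prop :=
  continuous (fun p : X * R => phi p.1 p.2) /\
  (forall x, phi x 0 = x) /\
  (forall x s t, phi (phi x s) t = phi x (s + t)).

Definition full_solution (phi : X -> R -> X) (gamma : R -> X) : Prop :=
  forall s t, gamma (s + t) = phi (gamma s) t.

Definition InvSet (phi : X -> R -> X) (N : set X) : set X :=
  [set x | N x /\ forall t, N (phi x t)].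

Definition isolating_nbhd (phi : X -> R -> X) (N : set X) : Prop :=
  compact N /\ InvSet phi N `<=` interior N.

Definition alpha_limit (gamma : R -> X) : set X :=
  \bigcap_(t in [set t : R | t < 0]) closure (gamma @` [set s | s <= t]).

Definition omega_limit (gamma : R -> X) : set X :=
  \bigcap_(t in [set t : R | 0 < t]) closure (gamma @` [set s | t <= s]).

Definition right_infinite (A : set R) : Prop :=
  forall M : R, exists a b : R, [/\ 0 <= a, 0 <= b,
    [set s | a <= s <= b] `<=` A & M < b - a].

Definition left_infinite (A : set R) : Prop :=
  forall M : R, exists a b : R, [/\ a <= 0, b <= 0,
    [set s | a <= s <= b] `<=` A & M < b - a].

Definition wades_plus (gamma : R -> X) (N : set X) : Prop :=
  exists tm tp : R ^nat,
    [/\ tm @ \oo --> +oo, (fun n => tp n - tm n) @ \oo --> +oo &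
        forall n, gamma @` [set s | tm n <= s <= tp n] `<=` N].

Definition wades_minus (gamma : R -> X) (N : set X) : Prop :=
  exists tm tp : R ^nat,
    [/\ tp @ \oo --> -oo, (fun n => tp n - tm n) @ \oo --> +oo &
        forall n, gamma @` [set s | tm n <= s <= tp n] `<=` N].

End Flows.

(* Main.v *)
Require Import Defs.
From HB Require Import structures.
From mathcomp Require Import all_boot all_order all_algebra.
From mathcomp Require Import all_classical all_reals all_analysis.
From mathcomp Require Import lra.
Import Order.TTheory GRing.Theory Num.Theory.
Import numFieldNormedType.Exports.
Local Open Scope classical_set_scope.
Local Open Scope ring_scope.
Set Implicit Arguments. Unset Strict Implicit. Unset Printing Implicit Defensive.

Section Plus.
Context {R : realType} {X : metricType R}.
Variables (phi : X -> R -> X) (N : set X) (gamma : R -> X).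

Lemma wp_ri : wades_plus gamma N -> right_infinite (gamma @^-1` N).
Proof.
move=> [tm [tp [Htm Htp Hs]]] M.
have [n [h1 h2]] : exists n, 0 <= tm n /\ `|M| < tp n - tm n.
  have H : \forall n \near \oo, 0 <= tm n /\ `|M| < tp n - tm n.
    near=> n; split; near: n; [exact: cvgry_ge Htm 0 | exact: cvgry_gt Htp _].
  by have [n [? ?]] := filter_ex H; exists n.
  Unshelve. all: end_near.
exists (tm n), (tp n); split => //.
- have : 0 <= `|M| by [].
  move: h1 h2; lra.
- by move=> s /= sin; apply: (Hs n); exists s.
- by apply: le_lt_trans h2; exact: ler_norm.
Qed.

Lemma ri_wp : right_infinite (gamma @^-1` N) -> wades_plus gamma N.
Proof.
move=> H.
have /choice [f Hf] : forall n : nat, exists ab : R * R,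
  [/\ 0 <= ab.1, 0 <= ab.2, [set s | ab.1 <= s <= ab.2] `<=` gamma @^-1` N
   & 2 * n%:R < ab.2 - ab.1].
  by move=> n; have [a [b Hab]] := H (2 * n%:R); exists (a, b).
exists (fun n => (f n).1 + n%:R), (fun n => (f n).2); split.
- apply/cvgryPge => A; near=> n; case: (Hf n) => h1 _ _ _.
  have hA : A <= n%:R by near: n; exact: nbhs_infty_ger.
  lra.
- apply/cvgryPge => A; near=> n; case: (Hf n) => _ _ _ h4.
  have hA : A <= n%:R by near: n; exact: nbhs_infty_ger.
  lra.
- move=> n y [s /= /andP[h1 h2] <-]; case: (Hf n) => _ _ Hsub h4.
  apply: Hsub => /=; apply/andP; split => //.
  have := ler0n R n; lra.
Unshelve. all: end_near. Qed.

Hypothesis Hc : continuous (fun p : X * R => phi p.1 p.2).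
Hypothesis Hsol : full_solution phi gamma.

Lemma cont_t t : continuous (fun y => phi y t).
Proof.
move=> y.
apply: (@continuous_comp _ _ _ (fun y => (y, t)) (fun p : X * R => phi p.1 p.2)).
  apply: (@cvg_pair _ _ _ (nbhs y) (nbhs y) (nbhs t) _ _ _ id (fun=> t)); [exact: cvg_id | exact: cvg_cst].
exact: Hc.
Qed.

Lemma wp_inv : compact N -> wades_plus gamma N -> InvSet phi N `&` omega_limit gamma !=set0.
Proof.
move=> Hcomp [tm [tp [Htm Hd Hs]]].
pose m n := (tm n + tp n) / 2.
have key : forall t, \forall n \near \oo, N (gamma (m n + t)).
  move=> t; near=> n; apply: (Hs n); exists (m n + t) => //=.
  have h : 2 * `|t| <= tp n - tm n by near: n; exact: cvgry_ge Hd _.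
  have ht1 : t <= `|t| := ler_norm t.
  have ht2 : - t <= `|t| by rewrite -normrN ler_norm.
  rewrite /m; apply/andP; split; lra.
have mge : forall A, \forall n \near \oo, A <= m n.
  move=> A; near=> n.
  have h1 : A <= tm n by near: n; exact: cvgry_ge Htm _.
  have h2 : 0 <= tp n - tm n by near: n; exact: cvgry_ge Hd _.
  rewrite /m; lra.
have HF : \forall n \near \oo, N (gamma (m n)).
  near=> n; rewrite -[m n]addr0; near: n; exact: key.
have [x [Nx clx]] := Hcomp ((fun n => gamma (m n)) @ \oo) _ HF.
have cN : closed N := compact_closed (@metric_hausdorff _ X) Hcomp.
exists x; split; first split => //.
  move=> t; rewrite ((closure_id N).1 cN) => B nB.
  have nB' : nbhs x ((fun y => phi y t) @^-1` B) := @cont_t t x B nB.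
  have HA : \forall n \near \oo, N (phi (gamma (m n)) t).
    near=> n; rewrite -Hsol; near: n; exact: key.
  have [y [/= Ny By]] := clx [set y | N (phi y t)] _ HA nB'.
  by exists (phi y t).
move=> t /= t0 B nB.
have HA : \forall n \near \oo, (gamma @` [set s | t <= s]) (gamma (m n)).
  near=> n; exists (m n) => //; near: n; exact: mge.
have [y [[s hs <-] By]] := clx (gamma @` [set s | t <= s]) B HA nB.
by exists (gamma s).
Unshelve. all: end_near. Qed.

Lemma tube x T : (forall t, interior N (phi x t)) ->
  \forall y \near x, forall t, -T <= t <= T -> N (phi y t).
Proof.
move=> Hint.
have cov := (compact_near_coveringP `[-T, T]%classic).1 (@segment_compact R (- T) T).
have H : forall t, `[-T, T]%classic t ->
    \forall t' \near t & y \near x, N (phi y t').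
  move=> t _.
  have E := near_swap (nbhs x) (nbhs t) (fun y t' => N (phi y t')).
  have H1 : \forall y \near x & t' \near t, N (phi y t') := @Hc (x, t) N (Hint t).
  exact: (@eq_ind Prop _ (fun P : Prop => P) H1 _ E).
have HF : Filter (nbhs x) by exact: nbhs_filter.
have := cov X (nbhs x) (fun y t => N (phi y t)) HF H.
apply: filterS => y Hy t /andP[h1 h2]; apply: Hy => /=.
by rewrite in_itv /= h1 h2.
Qed.

Lemma inv_wp : (forall x s t, phi (phi x s) t = phi x (s + t)) ->
  InvSet phi N `<=` interior N ->
  InvSet phi N `&` omega_limit gamma !=set0 -> wades_plus gamma N.
Proof.
move=> Hf Hiso [x [[Nx Hx] Hom]].
have Hint : forall t, interior N (phi x t).
  by move=> t; apply: Hiso; split => // s; rewrite Hf; exact: Hx.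
have Hn : forall n : nat, exists s : R, 2 * n%:R + 1 <= s /\
    forall t, - n%:R <= t <= n%:R -> N (gamma (s + t)).
  move=> n; have U := tube n%:R Hint.
  have h0 : 0 < 2 * n%:R + 1 :> R by have := ler0n R n; lra.
  have := Hom (2 * n%:R + 1) h0.
  move=> /(_ _ U) [_ [[s hs <-] Hy]].
  by exists s; split => // t ht; rewrite Hsol; exact: Hy t ht.
have /choice [s Hs] := Hn.
exists (fun n => s n - n%:R), (fun n => s n + n%:R); split.
- apply/cvgryPge => A; near=> n; have := (Hs n).1.
  have hA : A <= n%:R by near: n; exact: nbhs_infty_ger.
  lra.
- apply/cvgryPge => A; near=> n.
  have hA : A <= n%:R by near: n; exact: nbhs_infty_ger.
  have := ler0n R n; lra.
- move=> n y [u /= /andP[h1 h2] <-].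
  have := (Hs n).2 (u - s n); rewrite (_ : s n + (u - s n) = u); last by lra.
  apply.
  apply/andP; split; lra.
Unshelve. all: end_near. Qed.
End Plus.
Section Minus.
Context {R : realType} {X : metricType R}.
Variables (phi : X -> R -> X) (N : set X) (gamma : R -> X).
Let gr := fun s => gamma (- s).
Let phr := fun (y : X) (t : R) => phi y (- t).

Lemma li_ri : left_infinite (gamma @^-1` N) <-> right_infinite (gr @^-1` N).
Proof.
split => H M; have [a [b [h1 h2 h3 h4]]] := H M; exists (- b), (- a); split.
- by rewrite oppr_ge0.
- by rewrite oppr_ge0.
- move=> s /= /andP[s1 s2]; apply: h3 => /=; apply/andP; split; lra.
- lra.
- by rewrite oppr_le0.
- by rewrite oppr_le0.
- move=> s /= /andP[s1 s2]; rewrite -[s]opprK; apply: h3 => /=; apply/andP; split; lra.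
- lra.
Qed.

Lemma wm_wp : wades_minus gamma N <-> wades_plus gr N.
Proof.
split => -[tm [tp [H1 H2 H3]]].
- exists (fun n => - tp n), (fun n => - tm n); split.
  + by apply/cvgNry.
  + have -> : (fun n => - tm n - - tp n) = (fun n => tp n - tm n).
      by apply/funext => n; lra.
    exact: H2.
  + move=> n y [u /= /andP[u1 u2] <-]; apply: (H3 n); exists (- u) => //=.
    apply/andP; split; lra.
- exists (fun n => - tp n), (fun n => - tm n); split.
  + by apply/cvgNrNy.
  + have -> : (fun n => - tm n - - tp n) = (fun n => tp n - tm n).
      by apply/funext => n; lra.
    exact: H2.
  + move=> n y [u /= /andP[u1 u2] <-]; rewrite -[u]opprK.
    apply: (H3 n); exists (- u) => //=.
    apply/andP; split; lra.
Qed.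

Lemma inv_r : InvSet phr N = InvSet phi N.
Proof.
apply/seteqP; split => x [Nx Hx]; split => // t.
  by rewrite -[t]opprK; exact: Hx.
exact: Hx.
Qed.

Lemma alpha_r : alpha_limit gamma = omega_limit gr.
Proof.
have E : forall t, gamma @` [set s | s <= t] = gr @` [set s | - t <= s].
  move=> t; apply/seteqP; split => y [s /= hs <-].
    by exists (- s); rewrite /gr ?opprK //=; lra.
  by exists (- s) => //=; lra.
apply/seteqP; split => x Hx t /= ht.
  have := Hx (- t); rewrite E opprK; apply => /=; lra.
have := Hx (- t); rewrite E; apply => /=; lra.
Qed.

Lemma cont_r : continuous (fun p : X * R => phi p.1 p.2) ->
  continuous (fun p : X * R => phr p.1 p.2).
Proof.
move=> Hc p.
apply: (@continuous_comp _ _ _ (fun q : X * R => (q.1, - q.2)) (fun p : X * R => phi p.1 p.2)).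
  apply: (@cvg_pair _ _ _ (nbhs p) (nbhs p.1) (nbhs (- p.2)) _ _ _ fst (fun q : X * R => - q.2)).
    exact: cvg_fst.
  apply: cvgN; exact: cvg_snd.
exact: Hc.
Qed.

Lemma flow_r : (forall x s t, phi (phi x s) t = phi x (s + t)) ->
  (forall x s t, phr (phr x s) t = phr x (s + t)).
Proof. by move=> Hf x s t; rewrite /phr Hf opprD. Qed.

Lemma sol_r : full_solution phi gamma -> full_solution phr gr.
Proof. by move=> Hs s t; rewrite /gr /phr opprD Hs. Qed.

End Minus.

Theorem proposition5p21 (R : realType) (X : metricType R)
  (phi : X -> R -> X) (N : set X) (gamma : R -> X) :
  locally_compact [set: X] ->
  is_flow phi ->
  isolating_nbhd phi N ->
  full_solution phi gamma ->
  ((right_infinite (gamma @^-1` N) <-> wades_plus gamma N) /\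
   (wades_plus gamma N <-> InvSet phi N `&` omega_limit gamma !=set0)) /\
  ((left_infinite (gamma @^-1` N) <-> wades_minus gamma N) /\
   (wades_minus gamma N <-> InvSet phi N `&` alpha_limit gamma !=set0)).
Proof.
move=> _ [Hc [_ Hf]] [Hcomp Hiso] Hsol.
split.
  split; [split; [exact: ri_wp | exact: wp_ri] | split].
    exact: wp_inv.
  exact: inv_wp.
rewrite li_ri wm_wp alpha_r -(inv_r phi N).
have Hc' := cont_r Hc.
have Hsol' := sol_r Hsol.
have Hf' := flow_r Hf.
have Hiso' : InvSet (fun y t => phi y (- t)) N `<=` interior N by rewrite inv_r.
split; [split; [exact: ri_wp | exact: wp_ri] | split].
  exact: (wp_inv Hc' Hsol').
exact: (inv_wp Hc' Hsol').
Qed.
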